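(* There exists a constant $r_b>0$, depending on $r$, and a constant $C>0$ such that for all $\varepsilon>0$: (1) if $\xi\in\mathbb{H}^N$ and $\eta\in\mathbb{H}^N\setminus B_r(0)$ satisfy $|\eta^{-1}\circ\xi|\le r_b$, then $|u_\varepsilon(\xi)-u_\varepsilon(\eta)|\le C\varepsilon^{\frac{Q-2s}{2}}|\eta^{-1}\circ\xi|$; (2) if $\xi,\eta\in\mathbb{H}^N\setminus B_r(0)$, then $|u_\varepsilon(\xi)-u_\varepsilon(\eta)|\le C\varepsilon^{\frac{Q-2s}{2}}\min\{1,|\eta^{-1}\circ\xi|\}$.
   Context: $\mathbb{H}^N=\mathbb{R}^{2N+1}$ with group law $\xi\circ\xi'=(x+x',y+y',t+t'+2(x'\cdot y-y'\cdot x))$, $Q=2N+2$, dilations $\delta_a(x,y,t)=(ax,ay,a^2t)$, homogeneous norm $|\xi|=((|x|^2+|y|^2)^2+t^2)^{1/4}$, balls $B_r(0)=\{|\xi|<r\}$, $s\in(0,1)$, $Q^*_s=\frac{2Q}{Q-2s}$. $S_s>0$ is the sharp fractional Sobolev constant on $\mathbb{H}^N$. $U(x,y,t)=C_0(t^2+(1+|x|^2+|y|^2)^2)^{-\frac{Q-2s}{4}}$ ($C_0>0$), $\overline{u}=U/\|U\|_{L^{Q^*_s}(\mathbb{H}^N)}$, $u^*(\xi)=\overline{u}(\delta_{S_s^{-1/(2s)}}(\xi))$, $U_\varepsilon(\xi)=\varepsilon^{-\frac{Q-2s}{2}}u^*(\delta_{1/\varepsilon}(\xi))$. $\Omega\subseteq\mathbb{H}^N$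 is bounded open, $r>0$ with $B_{4r}(0)\subset\Omega$, $\phi\in C^\infty(\mathbb{H}^N)$, $0\le\phi\le1$, $\phi=1$ on $B_r(0)$, $\phi=0$ outside $B_{2r}(0)$, and $u_\varepsilon=U_\varepsilon\phi$. *)

(* Defs.v *)
From HB Require Import structures.
From mathcomp Require Import all_boot all_order all_algebra.
From mathcomp Require Import all_classical all_reals all_analysis.
Set Implicit Arguments. Unset Strict Implicit. Unset Printing Implicit Defensive.
Import Order.TTheory GRing.Theory Num.Theory.
Import numFieldNormedType.Exports.
Local Open Scope classical_set_scope.
Local Open Scope ring_scope.

(* The Heisenberg group H^N, realised on R^(2N+1) = 'rV[R]_(N + N + 1),
   coordinates (x, y, t) with x, y in R^N and t in R. *)
Definition Heis (R : realType) (N : nat) := 'rV[R]_(N + N + 1).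

Section Heisenberg.
Variables (R : realType) (N : nat).
Local Notation H := (Heis R N).

Definition hx (p : H) (i : 'I_N) : R := p ord0 (lshift 1 (lshift N i)).
Definition hy (p : H) (i : 'I_N) : R := p ord0 (lshift 1 (rshift N i)).
Definition ht (p : H) : R := p ord0 (rshift (N + N) (@ord0 0)).

Definition hmk (x y : 'I_N -> R) (t : R) : H :=
  \row_(k < N + N + 1)
    match fintype.split k with
    | inl k' => match fintype.split k' with inl i => x i | inr i => y i end
    | inr _ => t
    end.

Definition dotN (u v : 'I_N -> R) : R := \sum_(i < N) u i * v i.
Definition sqN (u : 'I_N -> R) : R := dotN u u.

Definition hmul (p q : H) : H :=
  hmk (fun i => hx p i + hx q i) (fun i => hy p i + hy q i)
      (ht p + ht q + 2 * (dotN (hx q) (hy p) - dotN (hy q) (hx p))).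

Definition hinv (p : H) : H :=
  hmk (fun i => - hx p i) (fun i => - hy p i) (- ht p).

Definition hdil (a : R) (p : H) : H :=
  hmk (fun i => a * hx p i) (fun i => a * hy p i) (a ^+ 2 * ht p).

Definition hnorm (p : H) : R :=
  Num.sqrt (Num.sqrt ((sqN (hx p) + sqN (hy p)) ^+ 2 + ht p ^+ 2)).

Definition hball (r : R) : set H := [set p | hnorm p < r].

Definition Qdim : R := (2 * N + 2)%:R.

Definition Ubub (s C0 : R) (p : H) : R :=
  C0 * powR (ht p ^+ 2 + (1 + sqN (hx p) + sqN (hy p)) ^+ 2)
            (- ((Qdim - 2 * s) / 4)).

(* ubar = U / nrmU, where nrmU stands for ||U||_{L^{Q*_s}(H^N)} *)
Definition ubar (s C0 nrmU : R) (p : H) : R := Ubub s C0 p / nrmU.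

Definition ustar (s C0 nrmU S : R) (p : H) : R :=
  ubar s C0 nrmU (hdil (powR S (- (1 / (2 * s)))) p).

Definition Ueps (s C0 nrmU S eps : R) (p : H) : R :=
  powR eps (- ((Qdim - 2 * s) / 2)) * ustar s C0 nrmU S (hdil (1 / eps) p).

Definition ueps (s C0 nrmU S eps : R) (phi : H -> R) (p : H) : R :=
  Ueps s C0 nrmU S eps p * phi p.

Fixpoint iter_deriv (f : H -> R) (vs : seq H) : H -> R :=
  match vs with
  | [::] => f
  | v :: vs' => fun x => 'D_v (iter_deriv f vs') x
  end.

Definition smooth (f : H -> R) : Prop :=
  forall (vs : seq H) (x : H), differentiable (iter_deriv f vs) x.

End Heisenberg.

(* Main.v *)
Require Import Defs.
From HB Require Import structures.
From mathcomp Require Import all_boot all_order all_algebra.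
From mathcomp Require Import all_classical all_reals all_analysis.
From mathcomp Require Import ring lra.
Import Order.TTheory GRing.Theory Num.Theory.
Import numFieldNormedType.Exports.
Local Open Scope classical_set_scope.
Local Open Scope ring_scope.
Set Implicit Arguments. Unset Strict Implicit. Unset Printing Implicit Defensive.


Lemma hx_mk (R : realType) (N : nat) x y t i : @hx R N (hmk x y t) i = x i.
Proof. by rewrite /hx /hmk mxE (unsplitK (inl _)) (unsplitK (inl _)). Qed.
Lemma hy_mk (R : realType) (N : nat) x y t i : @hy R N (hmk x y t) i = y i.
Proof. by rewrite /hy /hmk mxE (unsplitK (inl _)) (unsplitK (inr _)). Qed.
Lemma ht_mk (R : realType) (N : nat) x y t : @ht R N (hmk x y t) = t.
Proof. by rewrite /ht /hmk mxE (unsplitK (inr _)). Qed.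

Lemma sqN_scale (R : realType) (N : nat) (c : R) (u : 'I_N -> R) :
  sqN (fun i => c * u i) = c ^+ 2 * sqN u.
Proof. by rewrite /sqN /dotN mulr_sumr; apply: eq_bigr => i _; ring. Qed.

Lemma sqN_ge0 (R : realType) (N : nat) (u : 'I_N -> R) : 0 <= sqN u.
Proof. by rewrite /sqN /dotN sumr_ge0 // => i _; rewrite -expr2 sqr_ge0. Qed.

Lemma CS (R : realType) (N : nat) (a b c d : 'I_N -> R) :
  (\sum_i (a i * b i + c i * d i)) ^+ 2 <=
  (\sum_i (a i * a i) + \sum_i (c i * c i)) * (\sum_i (b i * b i) + \sum_i (d i * d i)).
Proof.
set X := \sum_i _; set A := _ + _; set B := \sum_i (b i * b i) + _.
have key l : 0 <= l ^+ 2 * A - 2 * l * X + B.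
  have -> : l ^+ 2 * A - 2 * l * X + B =
     \sum_i ((l * a i - b i) ^+ 2 + (l * c i - d i) ^+ 2).
    rewrite (eq_bigr (fun i => l ^+ 2 * (a i * a i) + l ^+ 2 * (c i * c i)
        + (- (2 * l)) * (a i * b i + c i * d i) + b i * b i + d i * d i));
      last by move=> i _; ring.
    rewrite !big_split /= -!mulr_sumr /A /B /X; ring.
  by apply: sumr_ge0 => i _; rewrite addr_ge0 // sqr_ge0.
have A0 : 0 <= A by rewrite addr_ge0 // sumr_ge0 // => i _; rewrite -expr2 sqr_ge0.
have [Ap|] := ltrP 0 A.
  have := key (X / A).
  have -> : (X / A) ^+ 2 * A - 2 * (X / A) * X + B = B - X ^+ 2 / A.
    by field; rewrite gt_eqF.
  rewrite subr_ge0 ler_pdivrMr // => H; by rewrite mulrC.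
move=> A0'; have AE : A = 0 by apply/eqP; rewrite eq_le A0' A0.
have := key ((B + 1) / (2 * X)); rewrite AE mulr0 add0r.
have [->|Xn0] := eqVneq X 0; first by rewrite expr0n /= mul0r.
have -> : - (2 * ((B + 1) / (2 * X)) * X) + B = -1 by field.
move=> H; have : (0:R) < 1 by []; lra.
Qed.
Lemma hx_mkf (R : realType) (N : nat) x y t : @hx R N (hmk x y t) = x.
Proof. by apply: funext => i; rewrite hx_mk. Qed.
Lemma hy_mkf (R : realType) (N : nat) x y t : @hy R N (hmk x y t) = y.
Proof. by apply: funext => i; rewrite hy_mk. Qed.


Definition rho (R : realType) (N : nat) (p : Heis R N) : R := sqN (hx p) + sqN (hy p).

Lemma rho_ge0 (R : realType) (N : nat) (p : Heis R N) : 0 <= rho p.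
Proof. by rewrite addr_ge0 // sqN_ge0. Qed.

Lemma hnorm_ge0 (R : realType) (N : nat) (p : Heis R N) : 0 <= hnorm p.
Proof. exact: sqrtr_ge0. Qed.

Lemma hnorm4 (R : realType) (N : nat) (p : Heis R N) :
  hnorm p ^+ 4 = rho p ^+ 2 + ht p ^+ 2.
Proof.
have -> : (4 = 2 * 2)%N by []. rewrite exprM /hnorm sqr_sqrtr ?sqrtr_ge0 //.
by rewrite sqr_sqrtr // addr_ge0 // sqr_ge0.
Qed.

Lemma hZx (R : realType) (N : nat) (xi eta : Heis R N) i :
  hx (hmul (hinv eta) xi) i = hx xi i - hx eta i.
Proof. by rewrite /hmul hx_mk /hinv hx_mk addrC. Qed.
Lemma hZy (R : realType) (N : nat) (xi eta : Heis R N) i :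
  hy (hmul (hinv eta) xi) i = hy xi i - hy eta i.
Proof. by rewrite /hmul hy_mk /hinv hy_mk addrC. Qed.
Lemma hZt (R : realType) (N : nat) (xi eta : Heis R N) :
  ht (hmul (hinv eta) xi) = ht xi - ht eta
     - 2 * \sum_i (hx xi i * hy eta i - hy xi i * hx eta i).
Proof.
rewrite /hmul ht_mk /hinv ht_mk hx_mkf hy_mkf /dotN -sumrB.
have -> : \sum_i (hx xi i * - hy eta i - hy xi i * - hx eta i) =
  - \sum_i (hx xi i * hy eta i - hy xi i * hx eta i).
  by rewrite -sumrN; apply: eq_bigr => i _; ring.
ring.
Qed.

Lemma sq_bound (R : realType) (X c : R) : 0 <= c -> X ^+ 2 <= c ^+ 2 -> `|X| <= c.
Proof. move=> c0 H; rewrite -ler_sqr ?normr_ge0 // real_normK //; exact: num_real. Qed.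

Lemma hZ_bounds (R : realType) (N : nat) (xi eta : Heis R N) :
  rho (hmul (hinv eta) xi) <= hnorm (hmul (hinv eta) xi) ^+ 2 /\
  `|ht (hmul (hinv eta) xi)| <= hnorm (hmul (hinv eta) xi) ^+ 2.
Proof.
set Z := hmul _ _; have h4 := hnorm4 Z; have r0 := rho_ge0 Z.
have H2 : hnorm Z ^+ 4 = (hnorm Z ^+ 2) ^+ 2 by rewrite -exprM.
split.
  by rewrite -(ger0_norm r0); apply: sq_bound; [rewrite sqr_ge0|nra].
by apply: sq_bound; [rewrite sqr_ge0|nra].
Qed.

Lemma vec_bounds (R : realType) (N : nat) (xi eta : Heis R N) (e : R) :
  0 <= e -> rho eta <= e ^+ 2 ->
  `|rho xi - rho eta| <= 2 * e * hnorm (hmul (hinv eta) xi) + hnorm (hmul (hinv eta) xi) ^+ 2 /\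
  `|ht xi - ht eta| <= 2 * e * hnorm (hmul (hinv eta) xi) + hnorm (hmul (hinv eta) xi) ^+ 2.
Proof.
move=> e0 re.
set Z := hmul _ _; set h := hnorm Z.
have [rZ tZ] := hZ_bounds xi eta; rewrite -/Z -/h in rZ tZ.
have h0 : 0 <= h := hnorm_ge0 Z.
have rZ0 := rho_ge0 Z; have re0 := rho_ge0 eta.
have fx : hx Z = fun i => hx xi i - hx eta i by apply: funext => i; rewrite hZx.
have fy : hy Z = fun i => hy xi i - hy eta i by apply: funext => i; rewrite hZy.
have prod : rho eta * rho Z <= (e * h) ^+ 2.
  by rewrite exprMn; apply: ler_pM.
split.
  set X := \sum_i (hx eta i * (hx xi i - hx eta i) + hy eta i * (hy xi i - hy eta i)).
  have E : rho xi - rho eta = 2 * X + rho Z.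
    rewrite /rho fx fy /sqN /dotN /X.
    apply/eqP; rewrite -subr_eq0; apply/eqP.
    rewrite mulr_sumr.
    rewrite (_ : _ - _ = \sum_i (hx xi i * hx xi i + hy xi i * hy xi i
       - (hx eta i * hx eta i + hy eta i * hy eta i)
       - (2 * (hx eta i * (hx xi i - hx eta i) + hy eta i * (hy xi i - hy eta i))
          + ((hx xi i - hx eta i) * (hx xi i - hx eta i) + (hy xi i - hy eta i) * (hy xi i - hy eta i))))).
      by rewrite big1 // => i _; ring.
    by rewrite !sumrB !big_split.
  have CSX := CS (hx eta) (fun i => hx xi i - hx eta i) (hy eta) (fun i => hy xi i - hy eta i).
  have XB : `|X| <= e * h.
    apply: sq_bound; first exact: mulr_ge0.
    apply: le_trans CSX _; apply: le_trans prod.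
    by rewrite /rho fx fy /sqN /dotN.
  rewrite E; apply: le_trans (ler_normD _ _) _.
  rewrite normrM normr_nat (ger0_norm rZ0).
  apply: lerD; last by [].
  by rewrite -mulrA ler_pM2l.
set X := \sum_i ((hx xi i - hx eta i) * hy eta i + (hy xi i - hy eta i) * (- hx eta i)).
have E : ht xi - ht eta = 2 * X + ht Z.
  rewrite /Z hZt /X.
  have -> : \sum_i ((hx xi i - hx eta i) * hy eta i + (hy xi i - hy eta i) * - hx eta i) =
            \sum_i (hx xi i * hy eta i - hy xi i * hx eta i).
    by apply: eq_bigr => i _; ring.
  ring.
have CSX := CS (fun i => hx xi i - hx eta i) (hy eta) (fun i => hy xi i - hy eta i) (fun i => - hx eta i).
have XB : `|X| <= e * h.
  apply: sq_bound; first exact: mulr_ge0.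
  apply: le_trans CSX _; apply: le_trans prod.
  rewrite le_eqVlt; apply/orP; left; apply/eqP.
  rewrite /rho fx fy /sqN /dotN.
  have -> : \sum_i (- hx eta i * - hx eta i) = \sum_i (hx eta i * hx eta i).
    by apply: eq_bigr => i _; ring.
  ring.
rewrite E; apply: le_trans (ler_normD _ _) _.
rewrite normrM normr_nat.
apply: lerD; last by [].
by rewrite -mulrA ler_pM2l.
Qed.


Lemma pert (R : realType) (c r1 r2 t1 t2 e h : R) :
  0 <= c -> 0 <= r2 -> 0 < e -> 0 <= h -> 60 * h <= e ->
  (c + r2) ^+ 2 + t2 ^+ 2 = e ^+ 4 ->
  `|r1 - r2| <= 2 * e * h + h ^+ 2 -> `|t1 - t2| <= 2 * e * h + h ^+ 2 ->
  `|((c + r1) ^+ 2 + t1 ^+ 2) - ((c + r2) ^+ 2 + t2 ^+ 2)| <= 18 * h * e ^+ 3 /\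
  e ^+ 4 / 2 <= (c + r1) ^+ 2 + t1 ^+ 2.
Proof.
move=> c0 r20 e0 h0 he E d1 d2.
have e4 : e ^+ 4 = (e ^+ 2) ^+ 2 by rewrite -exprM.
have e20 : 0 <= e ^+ 2 by rewrite sqr_ge0.
have B1 : `|c + r2| <= e ^+ 2.
  apply: sq_bound => //; rewrite -e4 -E lerDl sqr_ge0 //.
have B2 : `|t2| <= e ^+ 2.
  apply: sq_bound => //; rewrite -e4 -E lerDr sqr_ge0 //.
have eh : 2 * e * h + h ^+ 2 <= 3 * e * h by nra.
have D1 : `|r1 - r2| <= 3 * e * h by apply: le_trans eh.
have D2 : `|t1 - t2| <= 3 * e * h by apply: le_trans eh.
have S1 : `|2 * c + r1 + r2| <= 3 * e ^+ 2.
  rewrite (_ : 2 * c + r1 + r2 = 2 * (c + r2) + (r1 - r2)); last by ring.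
  apply: le_trans (ler_normD _ _) _; rewrite normrM normr_nat.
  have : 3 * e * h <= e ^+ 2 by nra.
  lra.
have S2 : `|t1 + t2| <= 3 * e ^+ 2.
  rewrite (_ : t1 + t2 = 2 * t2 + (t1 - t2)); last by ring.
  apply: le_trans (ler_normD _ _) _; rewrite normrM normr_nat.
  have : 3 * e * h <= e ^+ 2 by nra.
  lra.
have M : `|((c + r1) ^+ 2 + t1 ^+ 2) - ((c + r2) ^+ 2 + t2 ^+ 2)| <= 18 * h * e ^+ 3.
  rewrite (_ : _ - _ = (r1 - r2) * (2 * c + r1 + r2) + (t1 - t2) * (t1 + t2)); last by ring.
  apply: le_trans (ler_normD _ _) _; rewrite !normrM.
  have P1 : `|r1 - r2| * `|2 * c + r1 + r2| <= (3 * e * h) * (3 * e ^+ 2).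
    by apply: ler_pM.
  have P2 : `|t1 - t2| * `|t1 + t2| <= (3 * e * h) * (3 * e ^+ 2).
    by apply: ler_pM.
  have -> : 18 * h * e ^+ 3 = (3 * e * h) * (3 * e ^+ 2) + (3 * e * h) * (3 * e ^+ 2) by ring.
  exact: lerD.
split => //.
have := ler_norml (((c + r1) ^+ 2 + t1 ^+ 2) - ((c + r2) ^+ 2 + t2 ^+ 2)) (18 * h * e ^+ 3).
rewrite M => /esym /andP [L _].
have : 18 * h * e ^+ 3 <= e ^+ 4 / 2.
  have e3 : 0 <= e ^+ 3 by rewrite exprn_ge0 // ltW.
  have -> : e ^+ 4 = e * e ^+ 3 by rewrite exprS.
  nra.
rewrite E in L |- *; lra.
Qed.


Lemma powR_anti (R : realType) (x y b : R) : 0 < x -> x <= y -> 0 <= b ->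
  y `^ (- b) <= x `^ (- b).
Proof.
move=> x0 xy b0; rewrite !powRN lef_pV2 ?posrE ?powR_gt0 //; last exact: lt_le_trans xy.
by apply: ge0_ler_powR => //; rewrite nnegrE ltW // (lt_le_trans x0 xy).
Qed.

Lemma itv_oo_lo (R : realType) (A B x : R) : x \in `]A, B[ -> A < x.
Proof. by rewrite in_itv /= => /andP[]. Qed.
Lemma itv_cc_lo (R : realType) (A B x : R) : x \in `[A, B] -> A <= x.
Proof. by rewrite in_itv /= => /andP[]. Qed.

Lemma powR_lip (R : realType) (A B m b : R) : 0 < m -> m <= A -> m <= B -> 0 <= b ->
  `|A `^ (- b) - B `^ (- b)| <= b * m `^ (- b - 1) * `|A - B|.
Proof.
move=> m0 mA mB b0.
wlog AB : A B mA mB / A <= B.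
  move=> W; have [/W|/ltW /W] := leP A B; first exact.
  by rewrite distrC [`|B - A|]distrC; apply.
have A0 : 0 < A by exact: lt_le_trans mA.
have cont : {within `[A, B], continuous (fun x => powR x (- b))}.
  apply: continuous_in_subspaceT => x /set_mem xAB.
  have x0 : 0 < x by apply: lt_le_trans A0 (itv_cc_lo xAB).
  apply: differentiable_continuous; apply/derivable1_diffP.
  by apply: derivable_powR; rewrite in_itv /= andbT.
have [c cAB E] := @MVT_segment R (fun x => powR x (- b)) (fun x => (- b) * x `^ (- b - 1)) A B AB
   (fun x xAB => @is_derive1_powR R (- b) x (lt_le_trans A0 (ltW (itv_oo_lo xAB)))) cont.
  rewrite distrC E normrM normrM normrN (ger0_norm b0).
  rewrite [`|B - A|]distrC; apply: ler_wpM2r => //; apply: ler_wpM2l => //.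
  have c0 : 0 < c by apply: lt_le_trans A0 (itv_cc_lo cAB).
  rewrite ger0_norm ?powR_ge0 //.
  rewrite (_ : - b - 1 = - (b + 1)); last by ring.
  apply: powR_anti => //; last by lra.
  by apply: le_trans mA (itv_cc_lo cAB).
Qed.


Definition Gf (R : realType) (N : nat) (nu : R) (p : Heis R N) : R :=
  ht p ^+ 2 + (nu + rho p) ^+ 2.

Lemma powR_V (R : realType) (x b : R) : 0 < x -> (x ^-1) `^ b = (x `^ b)^-1.
Proof.
move=> x0; have nz : x `^ b != 0 by rewrite gt_eqF ?powR_gt0.
apply: (mulIf nz); rewrite mulVf // -powRM ?invr_ge0 ?ltW // mulVf ?gt_eqF //.
by rewrite powR1.
Qed.

Lemma Ueps_eq (R : realType) (N : nat) (s C0 nrmU S eps : R) (p : Heis R N) :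
  0 < eps -> 0 < S ->
  Ueps s C0 nrmU S eps p =
  C0 / nrmU * ((powR S (- (1 / (2 * s)))) ^+ 4) `^ (- ((@Qdim R N - 2 * s) / 4))
    * eps `^ ((@Qdim R N - 2 * s) / 2)
    * (Gf (eps ^+ 2 / (powR S (- (1 / (2 * s)))) ^+ 2) p) `^ (- ((@Qdim R N - 2 * s) / 4)).
Proof.
move=> e0 S0; set lam := powR S _; set b := (Qdim R N - 2 * s) / 4.
have l0 : 0 < lam by apply: powR_gt0.
rewrite /Ueps /ustar /ubar /Ubub -/lam.
rewrite !ht_mk !hx_mkf !hy_mkf.
rewrite !sqN_scale.
set mu2 := lam ^+ 2 / eps ^+ 2.
have mu0 : 0 < mu2 by rewrite divr_gt0 // exprn_gt0.
have -> : (lam ^+ 2 * ((1 / eps) ^+ 2 * ht p)) ^+ 2 +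
     (1 + lam ^+ 2 * ((1 / eps) ^+ 2 * sqN (hx p)) + lam ^+ 2 * ((1 / eps) ^+ 2 * sqN (hy p))) ^+ 2
   = mu2 ^+ 2 * Gf (eps ^+ 2 / lam ^+ 2) p.
  rewrite /Gf /rho /mu2; field.
  by rewrite !gt_eqF.
rewrite -/b powRM ?sqr_ge0 //; last by rewrite /Gf addr_ge0 // sqr_ge0.
set a := (Qdim R N - 2 * s) / 2.
have HM : (mu2 ^+ 2) `^ (- b) = (lam ^+ 4) `^ (- b) * eps `^ (2 * a).
  have -> : mu2 ^+ 2 = lam ^+ 4 * (eps ^+ 4)^-1.
    by rewrite /mu2; field; rewrite gt_eqF.
  rewrite powRM ?exprn_ge0 ?invr_ge0 ?ltW //.
  have e4 : 0 < eps ^+ 4 by rewrite exprn_gt0.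
  rewrite (powR_V _ e4).
  rewrite [(eps ^+ 4) `^ (- b)]powRN invrK.
  rewrite -(@powR_mulrn _ eps 4) ?ltW // -powRrM.
  congr (_ * eps `^ _); rewrite /b /a; field => //.
  all: try done. all: try by rewrite exprn_gt0.
have HE : eps `^ (- a) * eps `^ (2 * a) = eps `^ a.
  rewrite -powRD; last by rewrite (gt_eqF e0) implybT.
  congr (_ `^ _); ring.
rewrite HM -HE -/b; ring.
Qed.


Lemma Gf_ge (R : realType) (N : nat) (nu : R) (p : Heis R N) :
  0 <= nu -> hnorm p ^+ 4 <= Gf nu p.
Proof.
move=> nu0; rewrite hnorm4 /Gf.
have r0 := rho_ge0 p; nra.
Qed.

Lemma pow4_le (R : realType) (x y : R) : 0 <= x -> 0 <= y -> x ^+ 4 <= y ^+ 4 -> x <= y.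
Proof. by move=> x0 y0; rewrite ler_pXn2r // nnegrE. Qed.

Lemma B1 (R : realType) (N : nat) (nu b R0 : R) (p : Heis R N) :
  0 <= nu -> 0 <= b -> 0 < R0 -> R0 <= hnorm p ->
  Gf nu p `^ (- b) <= (R0 ^+ 4) `^ (- b).
Proof.
move=> nu0 b0 R00 Rp; apply: powR_anti => //; first exact: exprn_gt0.
apply: le_trans (Gf_ge p nu0).
by rewrite ler_pXn2r // nnegrE ltW // (lt_le_trans R00 Rp).
Qed.

Lemma Gf_ge0 (R : realType) (N : nat) (nu : R) (p : Heis R N) : 0 <= Gf nu p.
Proof. by rewrite /Gf addr_ge0 // sqr_ge0. Qed.

Lemma eq_le_trans_helper (R : realType) (x y : R) : x = y -> y <= x.
Proof. by move=> ->. Qed.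

Lemma B2 (R : realType) (N : nat) (nu b r : R) (xi eta : Heis R N) :
  0 <= nu -> 0 <= b -> 0 < r -> r <= hnorm eta ->
  60 * hnorm (hmul (hinv eta) xi) <= r ->
  `|Gf nu xi `^ (- b) - Gf nu eta `^ (- b)|
     <= 36 * b * (r ^+ 4 / 2) `^ (- b) / r * hnorm (hmul (hinv eta) xi).
Proof.
move=> nu0 b0 r0 reta hr.
set h := hnorm _ in hr *.
have h0 : 0 <= h := hnorm_ge0 _.
set e := Num.sqrt (Num.sqrt (Gf nu eta)).
have e4 : e ^+ 4 = Gf nu eta.
  have -> : (4 = 2 * 2)%N by [].
  by rewrite exprM /e sqr_sqrtr ?sqrtr_ge0 // sqr_sqrtr // Gf_ge0.
have e0' : 0 <= e by apply: sqrtr_ge0.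
have re : r <= e.
  apply: pow4_le => //; first exact: ltW.
  rewrite e4; apply: le_trans (Gf_ge _ nu0).
  by rewrite ler_pXn2r // nnegrE ?ltW // (lt_le_trans r0 reta).
have e0 : 0 < e by apply: lt_le_trans r0 re.
have rho_e : rho eta <= e ^+ 2.
  have : `|nu + rho eta| <= e ^+ 2.
    apply: sq_bound; first by rewrite sqr_ge0.
    by rewrite -exprM /= e4 /Gf lerDr sqr_ge0.
  have := rho_ge0 eta. move=> r0' H; have := ler_norml (nu + rho eta) (e ^+ 2).
  rewrite H => /esym /andP [_ H2]; lra.
have [V1 V2] := vec_bounds xi e0' rho_e.
rewrite -/h in V1 V2.
have [P1 P2] := pert (r1:=rho xi) (t1:=ht xi) nu0 (rho_ge0 eta) e0 h0 (le_trans hr re)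
    (etrans (addrC _ _) (esym e4)) V1 V2.
have GE : Gf nu xi = (nu + rho xi) ^+ 2 + ht xi ^+ 2 by rewrite /Gf addrC.
have GE' : Gf nu eta = (nu + rho eta) ^+ 2 + ht eta ^+ 2 by rewrite /Gf addrC.
set m := e ^+ 4 / 2.
have m0 : 0 < m by rewrite divr_gt0 // exprn_gt0.
have mle : m <= Gf nu eta by rewrite /m e4; have := Gf_ge0 nu eta; lra.
have L := powR_lip m0 (le_trans P2 (eq_le_trans_helper GE)) mle b0.
apply: le_trans L _.
rewrite GE GE'.
have mpow : m `^ (- b - 1) = m `^ (- b) / m.
  rewrite powRD; last by rewrite (gt_eqF m0) implybT.
  by rewrite powR_inv1 // ltW.
rewrite mpow.
have mb : m `^ (- b) <= (r ^+ 4 / 2) `^ (- b).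
  apply: powR_anti => //; first by rewrite divr_gt0 // exprn_gt0.
  rewrite /m ler_pM2r // ler_pXn2r // nnegrE ltW //.
have mb0 : 0 <= m `^ (- b) := powR_ge0 _ _.
apply: le_trans (ler_wpM2l _ P1) _.
  by rewrite mulr_ge0 // divr_ge0 // ltW.
have em : e ^+ 3 / m = 2 / e.
  rewrite /m; field; rewrite gt_eqF //.
have -> : b * (m `^ (- b) / m) * (18 * h * e ^+ 3) = 18 * b * m `^ (- b) * h * (e ^+ 3 / m).
  by rewrite /m; field; rewrite gt_eqF // exprn_gt0.
rewrite em.
have ie : 2 / e <= 2 / r by rewrite ler_wpM2l // lef_pV2 ?posrE.
have -> : 36 * b * (r ^+ 4 / 2) `^ (- b) / r * h = 18 * b * (r ^+ 4 / 2) `^ (- b) * h * (2 / r).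
  by field; rewrite gt_eqF.
apply: ler_pM; first by rewrite !mulr_ge0.
- by rewrite divr_ge0 // ltW.
- by rewrite ler_wpM2r // ler_wpM2l // mulr_ge0.
- exact: ie.
Qed.


Lemma line_derive (R : realType) (n : nat) (phi : 'rV[R]_n -> R) (q v : 'rV[R]_n) (t : R) :
  differentiable phi (q + t *: v) ->
  is_derive t 1 (fun t => phi (q + t *: v)) ('D_v phi (q + t *: v)).
Proof.
move=> dphi.
have E : (fun h : R => h^-1 *: (((fun t => phi (q + t *: v)) \o shift t) (h *: 1) - phi (q + t *: v)))
   = (fun h : R => h^-1 *: ((phi \o shift (q + t *: v)) (h *: v) - phi (q + t *: v))).
  apply: funext => h /=; congr (_ *: (phi _ - _)).
  by rewrite /shift /= scalerDl [h *: 1]mulr1 addrCA.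
split; first by rewrite /derivable E; exact: diff_derivable.
by rewrite /derive E.
Qed.

Lemma term_le_sum (R : realType) (n : nat) (f : 'I_n -> R) k :
  (forall j, 0 <= f j) -> f k <= \sum_j f j.
Proof. by move=> f0; rewrite (bigD1 k) //= lerDl sumr_ge0. Qed.

Lemma phi_lip (R : realType) (n : nat) (phi : 'rV[R]_n -> R) (M : R) :
  (forall x, differentiable phi x) ->
  (forall k x, differentiable (fun y => 'D_(delta_mx 0 k) phi y) x) ->
  exists L, 0 <= L /\ forall p q : 'rV[R]_n,
    (forall k, `|p ord0 k| <= M) -> (forall k, `|q ord0 k| <= M) ->
    `|phi p - phi q| <= L * \sum_k `|p ord0 k - q ord0 k|.
Proof.
move=> dphi dD.
pose K := [set v : 'rV[R]_n | forall i, (`[- M, M]%classic : set R) (v ord0 i)].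
have Kc : compact K.
  by apply: (@rV_compact _ _ (fun=> `[- M, M]%classic)) => _; apply: segment_compact.
have bnd k : exists Lk : R, forall x, K x -> `|'D_(delta_mx 0 k) phi x| <= Lk.
  have cf : continuous (fun y => 'D_(delta_mx 0 k) phi y).
    by move=> x; apply: differentiable_continuous.
  have cK : {within K, continuous (fun y => 'D_(delta_mx 0 k) phi y)}.
    exact: continuous_subspaceT.
  have := compact_bounded (continuous_compact cK Kc).
  move=> [M0 [_ HM]]; exists (`|M0| + 1) => x Kx.
  apply: (HM (`|M0| + 1)); first by have := ler_norm M0; lra.
  by exists x.
have [Lk HLk] := choice bnd.
pose L := \sum_k `|Lk k|.
exists L; split; first by apply: sumr_ge0 => k _.
move=> p q Hp Hq.
set v := p - q.
have cont : {within `[0, 1], continuous (fun t => phi (q + t *: v))}.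
  apply: continuous_subspaceT => t.
  case: (line_derive (dphi (q + t *: v))) => H _.
  exact/differentiable_continuous/derivable1_diffP.
have [c c01 E] := @MVT_segment R (fun t => phi (q + t *: v))
(fun t => 'D_v phi (q + t *: v)) 0 1 ler01
(fun t _ => line_derive (dphi (q + t *: v))) cont.
have qv : q + v = p by rewrite /v addrC subrK.
rewrite /= scale1r scale0r addr0 subr0 mulr1 qv in E.
rewrite E.
set x := q + c *: v.
have Kx : K x.
  move=> i; rewrite /x /v /= !mxE.
  have := Hp i; have := Hq i; rewrite !ler_norml => /andP[q1 q2] /andP[p1 p2].
  move: c01; rewrite in_itv /= => /andP[c0 c1].
  rewrite in_itv /=; apply/andP; split; nra.
rewrite deriveE // {1}(row_sum_delta v) linear_sum /=.
apply: le_trans (ler_norm_sum _ _ _) _.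
rewrite mulr_sumr; apply: ler_sum => k _.
rewrite linearZ /= normrM mulrC.
have -> : v 0 k = p ord0 k - q ord0 k by rewrite /v !mxE.
apply: ler_wpM2r => //.
rewrite -deriveE //; apply: le_trans (HLk k x Kx) _.
apply: le_trans (ler_norm _) _.
by rewrite /L (bigD1 k) //= lerDl sumr_ge0.
Qed.


Lemma sum_coords (R : realType) (N : nat) (f : 'I_(N + N + 1) -> R) :
  \sum_k f k = \sum_i f (lshift 1 (lshift N i)) + \sum_i f (lshift 1 (rshift N i))
     + f (rshift (N + N) ord0).
Proof. by rewrite big_split_ord /= big_split_ord big_ord1. Qed.

Lemma coord_cases (R : realType) (N : nat) (p : Heis R N) (A : R) :
  (forall i, `|hx p i| <= A) -> (forall i, `|hy p i| <= A) -> `|ht p| <= A ->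
  forall k, `|p ord0 k| <= A.
Proof.
move=> Hx Hy Ht k; case: (split_ordP k) => [k' ->|k' ->].
  case: (split_ordP k') => [i ->|i ->]; [exact: Hx | exact: Hy].
by have -> : k' = ord0 by apply: ord1.
Qed.

Lemma coord_sq (R : realType) (N : nat) (u : 'I_N -> R) i : u i ^+ 2 <= sqN u.
Proof.
rewrite /sqN /dotN expr2; apply: (@term_le_sum _ _ (fun j => u j * u j) i) => j.
by rewrite -expr2 sqr_ge0.
Qed.

Lemma hnorm_bounds (R : realType) (N : nat) (p : Heis R N) :
  rho p <= hnorm p ^+ 2 /\ `|ht p| <= hnorm p ^+ 2.
Proof.
have h4 := hnorm4 p; have r0 := rho_ge0 p.
have H2 : hnorm p ^+ 4 = (hnorm p ^+ 2) ^+ 2 by rewrite -exprM.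
split.
  by rewrite -(ger0_norm r0); apply: sq_bound; [rewrite sqr_ge0|nra].
by apply: sq_bound; [rewrite sqr_ge0|nra].
Qed.

Lemma coordx_le (R : realType) (N : nat) (p : Heis R N) i : `|hx p i| <= hnorm p.
Proof.
apply: sq_bound; first exact: hnorm_ge0.
have [H _] := hnorm_bounds p.
apply: le_trans (coord_sq _ i) _; apply: le_trans H.
by rewrite /rho lerDl sqN_ge0.
Qed.

Lemma coordy_le (R : realType) (N : nat) (p : Heis R N) i : `|hy p i| <= hnorm p.
Proof.
apply: sq_bound; first exact: hnorm_ge0.
have [H _] := hnorm_bounds p.
apply: le_trans (coord_sq _ i) _; apply: le_trans H.
by rewrite /rho lerDr sqN_ge0.
Qed.

Lemma B3 (R : realType) (N : nat) (phi : Heis R N -> R) (r : R) :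
  smooth phi -> (forall p, ~ hball (2 * r) p -> phi p = 0) -> 0 < r ->
  exists L, 0 <= L /\ forall xi eta : Heis R N, r <= hnorm eta ->
    60 * hnorm (hmul (hinv eta) xi) <= r ->
    `|phi xi - phi eta| <= L * hnorm (hmul (hinv eta) xi).
Proof.
move=> sm phi0 r0.
have [L0 [L00 HL]] := @phi_lip R _ phi (4 * r + 16 * r ^+ 2)
   (fun x => sm [::] x) (fun k x => sm [:: delta_mx 0 k] x).
exists (L0 * (2 * N%:R + 7 * r)); split.
  by rewrite mulr_ge0 // addr_ge0 // mulr_ge0 // ltW.
move=> xi eta reta hr.
set h := hnorm _ in hr *.
have h0 : 0 <= h := hnorm_ge0 _.
have [rb tb] := hnorm_bounds eta.
have [Hbig|Hsmall] := leP (3 * r) (hnorm eta).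
  set e := hnorm eta.
  have e0 : 0 < e by apply: lt_le_trans r0 reta.
  have [V1 V2] := vec_bounds xi (ltW e0) rb.
  rewrite -/h in V1 V2.
  have E4 : (0 + rho eta) ^+ 2 + ht eta ^+ 2 = e ^+ 4 by rewrite add0r hnorm4.
  have [_ P2] := pert (r1:=rho xi) (t1:=ht xi) (lexx 0) (rho_ge0 eta) e0 h0
     (le_trans hr reta) E4 V1 V2.
  rewrite add0r -hnorm4 in P2.
  have xbig : 2 * r <= hnorm xi.
    apply: pow4_le; [by rewrite mulr_ge0 // ltW | exact: hnorm_ge0 |].
    apply: le_trans P2.
    have : (3 * r) ^+ 4 <= e ^+ 4 by rewrite ler_pXn2r // nnegrE ?mulr_ge0 // ltW.
    have r40 : 0 <= r ^+ 4 by rewrite exprn_ge0 // ltW.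
    rewrite !exprMn; lra.
  rewrite !phi0; first by rewrite subrr normr0 mulr_ge0 // mulr_ge0 // addr_ge0 // mulr_ge0 // ltW.
  - by rewrite /hball /= => H; have := Hbig; rewrite -/e; lra.
  - by rewrite /hball /= => H; lra.
have e0 : 0 <= 3 * r by rewrite mulr_ge0 // ltW.
have rb3 : rho eta <= (3 * r) ^+ 2.
  apply: le_trans rb _; rewrite ler_pXn2r ?nnegrE ?hnorm_ge0 //; exact: ltW.
have [V1 V2] := vec_bounds xi e0 rb3.
rewrite -/h in V1 V2.
have hr' : h <= r by lra.
have dx i : `|hx xi i - hx eta i| <= h.
  rewrite -hZx; apply: sq_bound => //.
  apply: le_trans (coord_sq _ i) _; have [H _] := hZ_bounds xi eta.
  by apply: le_trans H; rewrite /rho lerDl sqN_ge0.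
have dy i : `|hy xi i - hy eta i| <= h.
  rewrite -hZy; apply: sq_bound => //.
  apply: le_trans (coord_sq _ i) _; have [H _] := hZ_bounds xi eta.
  by apply: le_trans H; rewrite /rho lerDr sqN_ge0.
have dt : `|ht xi - ht eta| <= 7 * r * h.
  apply: le_trans V2 _; nra.
have ex i : `|hx eta i| <= 3 * r by apply: le_trans (coordx_le _ _) (ltW Hsmall).
have ey i : `|hy eta i| <= 3 * r by apply: le_trans (coordy_le _ _) (ltW Hsmall).
have et : `|ht eta| <= 9 * r ^+ 2.
  apply: le_trans tb _.
  have : hnorm eta ^+ 2 <= (3 * r) ^+ 2 by rewrite ler_pXn2r ?nnegrE ?hnorm_ge0 // ltW.
  by rewrite exprMn; lra.
have Mge : 0 <= 4 * r + 16 * r ^+ 2 by rewrite addr_ge0 ?mulr_ge0 ?sqr_ge0 // ltW.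
have Hxi : forall k, `|xi ord0 k| <= 4 * r + 16 * r ^+ 2.
  apply: coord_cases.
  - move=> i; have := dx i; have := ex i.
    have := ler_normD (hx xi i - hx eta i) (hx eta i); rewrite subrK.
    have : 0 <= 16 * r ^+ 2 by rewrite mulr_ge0 // sqr_ge0.
    lra.
  - move=> i; have := dy i; have := ey i.
    have := ler_normD (hy xi i - hy eta i) (hy eta i); rewrite subrK.
    have : 0 <= 16 * r ^+ 2 by rewrite mulr_ge0 // sqr_ge0.
    lra.
  - have := ler_normD (ht xi - ht eta) (ht eta); rewrite subrK.
    have : 7 * r * h <= 7 * r ^+ 2 by rewrite expr2 -mulrA ler_pM2l ?ler_pM2l //; lra.
    have : 0 <= 4 * r by rewrite mulr_ge0 // ltW.
    lra.
have Heta : forall k, `|eta ord0 k| <= 4 * r + 16 * r ^+ 2.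
  apply: coord_cases.
  - move=> i; have := ex i; have : 0 <= 16 * r ^+ 2 by rewrite mulr_ge0 // sqr_ge0.
    lra.
  - move=> i; have := ey i; have : 0 <= 16 * r ^+ 2 by rewrite mulr_ge0 // sqr_ge0.
    lra.
  - have : 0 <= 4 * r by rewrite mulr_ge0 // ltW.
    lra.
apply: le_trans (HL xi eta Hxi Heta) _.
rewrite -mulrA; apply: ler_wpM2l => //.
rewrite sum_coords.
have S1 : \sum_i `|xi ord0 (lshift 1 (lshift N i)) - eta ord0 (lshift 1 (lshift N i))| <= h * N%:R.
  apply: le_trans (_ : \sum_(i < N) h <= _).
    by apply: ler_sum => i _; exact: dx.
  by rewrite sumr_const card_ord mulr_natr.
have S2 : \sum_i `|xi ord0 (lshift 1 (rshift N i)) - eta ord0 (lshift 1 (rshift N i))| <= h * N%:R.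
  apply: le_trans (_ : \sum_(i < N) h <= _).
    by apply: ler_sum => i _; exact: dy.
  by rewrite sumr_const card_ord mulr_natr.
have S3 : `|xi ord0 (rshift (N + N) ord0) - eta ord0 (rshift (N + N) ord0)| <= 7 * r * h := dt.
have -> : (2 * N%:R + 7 * r) * h = h * N%:R + h * N%:R + 7 * r * h by ring.
by apply: lerD => //; apply: lerD.
Qed.

Unset Implicit Arguments. Set Strict Implicit. Set Printing Implicit Defensive.

Theorem lemma3p10 (R : realType) (N : nat) (s C0 S nrmU r : R)
  (Omega : set (Heis R N)) (phi : Heis R N -> R) :
  (0 < N)%N -> 0 < s < 1 -> 0 < C0 -> 0 < S -> 0 < nrmU -> 0 < r ->
  open Omega -> bounded_set Omega -> hball (4 * r) `<=` Omega ->
  smooth phi -> (forall p, 0 <= phi p <= 1) ->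
  (forall p, hball r p -> phi p = 1) ->
  (forall p, ~ hball (2 * r) p -> phi p = 0) ->
  exists rb C : R, 0 < rb /\ 0 < C /\
    forall eps : R, 0 < eps ->
      (forall xi eta : Heis R N, ~ hball r eta ->
         hnorm (hmul (hinv eta) xi) <= rb ->
         `|ueps s C0 nrmU S eps phi xi - ueps s C0 nrmU S eps phi eta|
           <= C * powR eps ((@Qdim R N - 2 * s) / 2) * hnorm (hmul (hinv eta) xi))
      /\
      (forall xi eta : Heis R N, ~ hball r xi -> ~ hball r eta ->
         `|ueps s C0 nrmU S eps phi xi - ueps s C0 nrmU S eps phi eta|
           <= C * powR eps ((@Qdim R N - 2 * s) / 2)
                * Num.min 1 (hnorm (hmul (hinv eta) xi))).
Proof.
move=> N0 /andP[s0 s1] C00 S0 nrm0 r0 _ _ _ sm phi01 _ phi0.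
set lam := powR S (- (1 / (2 * s))).
set b := (@Qdim R N - 2 * s) / 4.
set a := (@Qdim R N - 2 * s) / 2.
have l0 : 0 < lam by apply: powR_gt0.
have Q2 : 2 <= @Qdim R N.
  by rewrite /Qdim ler_nat leq_addl.
have b0 : 0 <= b by rewrite /b divr_ge0 //; lra.
set K1 := C0 / nrmU * (lam ^+ 4) `^ (- b).
have K10 : 0 < K1 by rewrite /K1 !mulr_gt0 ?invr_gt0 ?powR_gt0 // exprn_gt0.
have [L [L0 HL]] := B3 sm phi0 r0.
set UB := K1 * (r ^+ 4) `^ (- b).
have UB0 : 0 <= UB by rewrite mulr_ge0 ?powR_ge0 // ltW.
set C2 := K1 * (36 * b * (r ^+ 4 / 2) `^ (- b) / r).
have C20 : 0 <= C2.
  rewrite /C2 mulr_ge0 ?(ltW K10) // divr_ge0 ?(ltW r0) //.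
  by rewrite mulr_ge0 ?powR_ge0 // mulr_ge0.
set rb := Num.min (r / 60) 1.
have rb0 : 0 < rb by rewrite /rb lt_min divr_gt0 //=.
have rb1 : rb <= 1 by rewrite /rb ge_min lexx orbT.
have rbr : 60 * rb <= r.
  have : rb <= r / 60 by rewrite /rb ge_min lexx.
  lra.
set Ca := C2 + UB * L.
set Cb := 2 * UB / rb.
have Ca0 : 0 <= Ca by rewrite addr_ge0 // mulr_ge0.
have Cb0 : 0 <= Cb by rewrite /Cb divr_ge0 ?(ltW rb0) // mulr_ge0.
exists rb, (Ca + Cb + 1); split; first exact: rb0.
split; first by have := addr_ge0 Ca0 Cb0; lra.
move=> eps e0.
have nu0 : 0 <= eps ^+ 2 / lam ^+ 2 by rewrite divr_ge0 // sqr_ge0.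
have ea0 : 0 <= eps `^ a := powR_ge0 _ _.
have UE (p : Heis R N) : Ueps s C0 nrmU S eps p = K1 * eps `^ a * Gf (eps ^+ 2 / lam ^+ 2) p `^ (- b).
  by rewrite (@Ueps_eq R N s C0 nrmU S eps p e0 S0).
have Ubnd (p : Heis R N) : r <= hnorm p -> `|Ueps s C0 nrmU S eps p| <= UB * eps `^ a.
  move=> rp; rewrite UE ger0_norm; last first.
    by apply: mulr_ge0; [apply: mulr_ge0; [exact: ltW|exact: ea0]|exact: powR_ge0].
  rewrite /UB mulrAC; apply: ler_wpM2r => //; apply: ler_wpM2l; first exact: ltW.
  exact: B1.
have notb (p : Heis R N) : ~ hball r p -> r <= hnorm p.
  by rewrite /hball /= => H; rewrite leNgt; apply/negP.
have P1 : forall xi eta : Heis R N, r <= hnorm eta ->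
    60 * hnorm (hmul (hinv eta) xi) <= r ->
    `|ueps s C0 nrmU S eps phi xi - ueps s C0 nrmU S eps phi eta|
      <= Ca * eps `^ a * hnorm (hmul (hinv eta) xi).
  move=> xi eta reta hr.
  set h := hnorm _ in hr *.
  rewrite /ueps.
  set Ux := Ueps _ _ _ _ _ xi; set Uy := Ueps _ _ _ _ _ eta.
  have -> : Ux * phi xi - Uy * phi eta = (Ux - Uy) * phi xi + Uy * (phi xi - phi eta) by ring.
  apply: le_trans (ler_normD _ _) _.
  rewrite (normrM (Ux - Uy)) (normrM Uy).
  have [p0 p1] := andP (phi01 xi).
  have D1 : `|Ux - Uy| <= C2 * eps `^ a * h.
    rewrite /Ux /Uy !UE -mulrBr normrM ger0_norm; last first.
      by apply: mulr_ge0; [exact: ltW|exact: ea0].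
    have -> : C2 * eps `^ a * h = (K1 * eps `^ a) * (36 * b * (r ^+ 4 / 2) `^ (- b) / r * h).
      by rewrite /C2; ring.
    apply: ler_wpM2l; first by apply: mulr_ge0; [exact: ltW|exact: ea0].
    exact: B2.
  have T1 : `|Ux - Uy| * `|phi xi| <= C2 * eps `^ a * h.
    apply: le_trans _ D1; rewrite (ger0_norm p0) -[leRHS]mulr1.
    by apply: ler_wpM2l.
  have T2 : `|Uy| * `|phi xi - phi eta| <= UB * eps `^ a * (L * h).
    apply: ler_pM => //; first exact: Ubnd.
    exact: HL.
  have -> : Ca * eps `^ a * h = C2 * eps `^ a * h + UB * eps `^ a * (L * h) by rewrite /Ca; ring.
  exact: lerD.
split.
  move=> xi eta /notb reta hrb.
  have h0 := hnorm_ge0 (hmul (hinv eta) xi).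
  apply: le_trans (P1 xi eta reta (le_trans (ler_wpM2l _ hrb) rbr)) _ => //.
  apply: ler_wpM2r => //; apply: ler_wpM2r => //; lra.
move=> xi eta /notb rxi /notb reta.
set h := hnorm _.
have h0 : 0 <= h := hnorm_ge0 _.
have [hle|hgt] := leP h rb.
  have -> : Num.min 1 h = h by apply/min_idPr; lra.
  apply: le_trans (P1 xi eta reta (le_trans (ler_wpM2l _ hle) rbr)) _ => //.
  apply: ler_wpM2r => //; apply: ler_wpM2r => //; lra.
have mn : rb <= Num.min 1 h by rewrite le_min rb1 ltW.
rewrite /ueps.
apply: le_trans (ler_normB _ _) _.
rewrite (normrM (Ueps s C0 nrmU S eps xi)) (normrM (Ueps s C0 nrmU S eps eta)).
have [p0 p1] := andP (phi01 xi); have [q0 q1] := andP (phi01 eta).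
have T1 : `|Ueps s C0 nrmU S eps xi| * `|phi xi| <= UB * eps `^ a.
  apply: le_trans _ (Ubnd _ rxi); rewrite (ger0_norm p0) -[leRHS]mulr1.
  by apply: ler_wpM2l.
have T2 : `|Ueps s C0 nrmU S eps eta| * `|phi eta| <= UB * eps `^ a.
  apply: le_trans _ (Ubnd _ reta); rewrite (ger0_norm q0) -[leRHS]mulr1.
  by apply: ler_wpM2l.
apply: le_trans (lerD T1 T2) _.
have -> : UB * eps `^ a + UB * eps `^ a = Cb * eps `^ a * rb.
  by rewrite /Cb; field; rewrite gt_eqF.
apply: le_trans (_ : Cb * eps `^ a * Num.min 1 h <= _).
  by apply: ler_wpM2l => //; rewrite mulr_ge0.
apply: ler_wpM2r; first by rewrite le_min ler01 h0.
apply: ler_wpM2r => //; lra.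
Qed.
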